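(* For all $k\in\mathbb{N}$ and all indices $i\ne j$ in their respective ranges, $\lambda^{(k)}_{i,j}\ge0$ and $\mu^{(k)}_{i,j}\ge0$.
   Context: $\rho=1+\sqrt2$; $\alpha_t=\rho^{\nu(t+1)-1}+1$ ($\nu(i)$ the largest $j$ with $2^j\mid i$). For $k\in\mathbb{N}$, $n=2^k-1$, $\pi^{(k)}=[\alpha_0,\dots,\alpha_{n-1}]\in\mathbb{R}^n$, indexed $\pi^{(k)}_1,\dots,\pi^{(k)}_n$. Define $c^{(k)}\in\mathbb{R}^n$ (indexed $1,\dots,n$) by $c^{(1)}=[2(\rho-1)]$, $c^{(k+1)}=[\pi^{(k)},(1+\rho^{-k})(\rho^{k-1}+1),\rho c^{(k)}-(\rho-1-\rho^{-k})\pi^{(k)}]$. Multipliers $\lambda^{(k)}_{i,j}$, $i\in\{0,\dots,n,*\}$, $j\in\{0,\dots,n\}$: $\lambda^{(k)}_{i,j}=\bar\lambda^{(k)}_{i,j}$ for $i\ne *$ and $\lambda^{(k)}_{*,j}=\underline\lambda^{(k)}_j$, where $\underline\lambda^{(k)}=[\pi^{(k)},\rho^k]$ indexed $0,\dots,n$ (so $\underline\lambda^{(k)}_j=\alpha_j$ for $j<n$, $\underline\lambda^{(k)}_n=\rho^k$). $\bar\lambda^{(1)}$ (indices $0,1$) has $\bar\lambda^{(1)}_{0,1}=\rho$, $\bar\lambda^{(1)}_{1,0}=1$, other entries $0$. For $n=2^k-1$ and indices $0\le i,j\le 2n+1$, $\bar\lambda^{(k+1)}_{i,j}$ is the sum of: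 $\bar\lambda^{(k)}_{i,j}\mathbf 1\{0\le i,j\le n\}+\rho^2\bar\lambda^{(k)}_{i-n-1,j-n-1}\mathbf 1\{n+1\le i,j\le 2n+1\}$; $\rho\mathbf 1\{(i,j)=(n,2n+1)\}+\rho^k\mathbf 1\{(i,j)=(2n+1,n)\}$; and $\rho\pi^{(k)}_{j-n}\mathbf 1\{i=n,\ n+1\le j\le 2n\}+\rho\pi^{(k)}_{j-n}\mathbf 1\{i=2n+1,\ n+1\le j\le 2n\}$. Multipliers $\mu^{(k)}_{i,j}$, $i\in\{1,\dots,n,*\}$, $j\in\{1,\dots,n\}$: $\mu^{(k)}_{i,j}=\bar\mu^{(k)}_{i,j}$ for $i\ne*$ and $\mu^{(k)}_{*,j}=c^{(k)}_j+\mathbf 1\{j=1\}$. $\bar\mu^{(1)}_{1,1}=0$. For $1\le i,j\le 2n+1$, $\bar\mu^{(k+1)}_{i,j}$ is the sum of: $\bar\mu^{(k)}_{i,j}\mathbf 1\{1\le i,j\le n\}+\rho^2\bar\mu^{(k)}_{i-n-1,j-n-1}\mathbf 1\{n+2\le i,j\le 2n+1\}$; $\rho^k\mathbf 1\{(i,j)=(n,n+1)\}+\rho^2\mathbf 1\{(i,j)=(n+1,n+2)\}+(\rho-\rho^{-k})(\rho^{k-1}+1)\mathbf 1\{(i,j)=(2n+1,n+1)\}$; and $\big(1-\frac{\rho^k}{\rho^{k-1}+1}\big)(c^{(k)}_j-\pi^{(k)}_j)\mathbf 1\{i=n,1\le j\le n\}+\frac{\rho^k}{\rho^{k-1}+1}(c^{(k)}_j-\pi^{(k)}_j)\mathbf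 1\{i=n+1,1\le j\le n\}+\frac{\rho^k}{\rho^{k-1}+1}\pi^{(k)}_{j-n-1}\mathbf 1\{i=n,n+2\le j\le 2n+1\}+\frac{\rho}{\rho^{k-1}+1}\pi^{(k)}_{j-n-1}\mathbf 1\{i=n+1,n+2\le j\le2n+1\}+\big((\rho+1)c^{(k)}_{j-n-1}-(1+\rho^{-k})\pi^{(k)}_{j-n-1}\big)\mathbf 1\{i=2n+1,n+2\le j\le 2n+1\}$. *)

(* Defs.v *)
From Stdlib Require Import Reals ZArith Arith Lia.
Open Scope R_scope.

Definition rho : R := 1 + sqrt 2.

Fixpoint nu_fuel (f i : nat) : nat :=
  match f with
  | O => O
  | S f' => if Nat.eqb i 0 then O
            else if Nat.even i then S (nu_fuel f' (Nat.div2 i)) else O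
  end.
Definition nu (i : nat) : nat := nu_fuel i i.

(* alpha_t = rho^(nu(t+1) - 1) + 1  (integer exponent, may be -1) *)
Definition alpha (t : nat) : R :=
  powerRZ rho (Z.of_nat (nu (t + 1)) - 1) + 1.

Definition dim (k : nat) : nat := 2 ^ k - 1.

Definition ind (b : bool) (x : R) : R := if b then x else 0.

Definition piv (k j : nat) : R :=
  ind ((1 <=? j)%nat && (j <=? dim k)%nat) (alpha (j - 1)).

(* c^(k), indexed 1..n; c^(0) is a dummy (zero). *)
Definition c_step (k : nat) (ck : nat -> R) (j : nat) : R :=
  let n := dim k in
  ind ((1 <=? j)%nat && (j <=? n)%nat) (piv k j)
  + ind (Nat.eqb j (n + 1)) ((1 + / rho ^ k) * (rho ^ (k - 1) + 1))
  + ind ((n + 2 <=? j)%nat && (j <=? 2 * n + 1)%nat)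
        (rho * ck (j - n - 1)%nat - (rho - 1 - / rho ^ k) * piv k (j - n - 1)%nat).

Fixpoint cvec (k : nat) : nat -> R :=
  match k with
  | O => fun _ => 0
  | S k' => match k' with
            | O => fun j => ind (Nat.eqb j 1) (2 * (rho - 1))
            | S _ => c_step k' (cvec k')
            end
  end.

Definition lbar_step (k : nat) (lk : nat -> nat -> R) (i j : nat) : R :=
  let n := dim k in
  ind ((i <=? n)%nat && (j <=? n)%nat) (lk i j)
  + ind ((n + 1 <=? i)%nat && (i <=? 2 * n + 1)%nat
         && (n + 1 <=? j)%nat && (j <=? 2 * n + 1)%nat)
        (rho ^ 2 * lk (i - n - 1)%nat (j - n - 1)%nat)
  + ind (Nat.eqb i n && Nat.eqb j (2 * n + 1)) rho
  + ind (Nat.eqb i (2 * n + 1) && Nat.eqb j n) (rho ^ k)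
  + ind (Nat.eqb i n && (n + 1 <=? j)%nat && (j <=? 2 * n)%nat)
        (rho * piv k (j - n)%nat)
  + ind (Nat.eqb i (2 * n + 1) && (n + 1 <=? j)%nat && (j <=? 2 * n)%nat)
        (rho * piv k (j - n)%nat).

Fixpoint lbar (k : nat) : nat -> nat -> R :=
  match k with
  | O => fun _ _ => 0
  | S k' => match k' with
            | O => fun i j => ind (Nat.eqb i 0 && Nat.eqb j 1) rho
                              + ind (Nat.eqb i 1 && Nat.eqb j 0) 1
            | S _ => lbar_step k' (lbar k')
            end
  end.

Definition llow (k j : nat) : R :=
  if (j <? dim k)%nat then alpha j else rho ^ k.

Definition mbar_step (k : nat) (mk : nat -> nat -> R) (i j : nat) : R :=
  let n := dim k in
  let ck := cvec k in
  let q := rho ^ k / (rho ^ (k - 1) + 1) in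
  ind ((1 <=? i)%nat && (i <=? n)%nat && (1 <=? j)%nat && (j <=? n)%nat) (mk i j)
  + ind ((n + 2 <=? i)%nat && (i <=? 2 * n + 1)%nat
         && (n + 2 <=? j)%nat && (j <=? 2 * n + 1)%nat)
        (rho ^ 2 * mk (i - n - 1)%nat (j - n - 1)%nat)
  + ind (Nat.eqb i n && Nat.eqb j (n + 1)) (rho ^ k)
  + ind (Nat.eqb i (n + 1) && Nat.eqb j (n + 2)) (rho ^ 2)
  + ind (Nat.eqb i (2 * n + 1) && Nat.eqb j (n + 1))
        ((rho - / rho ^ k) * (rho ^ (k - 1) + 1))
  + ind (Nat.eqb i n && (1 <=? j)%nat && (j <=? n)%nat)
        ((1 - q) * (ck j - piv k j))
  + ind (Nat.eqb i (n + 1) && (1 <=? j)%nat && (j <=? n)%nat)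
        (q * (ck j - piv k j))
  + ind (Nat.eqb i n && (n + 2 <=? j)%nat && (j <=? 2 * n + 1)%nat)
        (q * piv k (j - n - 1)%nat)
  + ind (Nat.eqb i (n + 1) && (n + 2 <=? j)%nat && (j <=? 2 * n + 1)%nat)
        (rho / (rho ^ (k - 1) + 1) * piv k (j - n - 1)%nat)
  + ind (Nat.eqb i (2 * n + 1) && (n + 2 <=? j)%nat && (j <=? 2 * n + 1)%nat)
        ((rho + 1) * ck (j - n - 1)%nat - (1 + / rho ^ k) * piv k (j - n - 1)%nat).

Fixpoint mbar (k : nat) : nat -> nat -> R :=
  match k with
  | O => fun _ _ => 0
  | S k' => match k' with
            | O => fun _ _ => 0
            | S _ => mbar_step k' (mbar k')
            end
  end.

Definition mlow (k j : nat) : R := cvec k j + ind (Nat.eqb j 1) 1.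

(* Main.v *)
Require Import Defs.
From Stdlib Require Import Reals ZArith Arith Lia Lra.
Require Import Defs.
Open Scope R_scope.

Lemma rho_sq : rho ^ 2 = 2 * rho + 1.
Proof. unfold rho. pose proof (sqrt_sqrt 2 ltac:(lra)). nra. Qed.

Lemma rho_gt2 : 2 < rho.
Proof.
  unfold rho. pose proof (sqrt_sqrt 2 ltac:(lra)). pose proof (sqrt_pos 2). nra.
Qed.

Lemma nu_fuel_ok : forall f f' i, (i <= f)%nat -> (i <= f')%nat -> nu_fuel f i = nu_fuel f' i.
Proof.
  induction f as [|f IH]; intros f' i H1 H2.
  - assert (i = 0%nat) by lia; subst. destruct f'; reflexivity.
  - destruct f' as [|f']. { assert (i = 0%nat) by lia; subst. reflexivity. }
    simpl. destruct (Nat.eqb_spec i 0); [reflexivity|].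
    destruct (Nat.even i); [|reflexivity].
    f_equal. pose proof (Nat.lt_div2 i ltac:(lia)). apply IH; lia.
Qed.

Lemma nu_fuel_S : forall f i, nu_fuel (S f) i =
  if Nat.eqb i 0 then O else if Nat.even i then S (nu_fuel f (Nat.div2 i)) else O.
Proof. reflexivity. Qed.

Lemma nu_even : forall m, (1 <= m)%nat -> nu (2 * m) = S (nu m).
Proof.
  intros m Hm. unfold nu.
  replace (2 * m)%nat with (S (2 * m - 1)) at 1 by lia.
  rewrite nu_fuel_S. destruct (Nat.eqb_spec (2*m) 0); [lia|].
  rewrite Nat.even_even, Nat.div2_double. f_equal. apply nu_fuel_ok; lia.
Qed.

Lemma nu_odd : forall m, nu (2 * m + 1) = 0%nat.
Proof.
  intros m. unfold nu. replace (2 * m + 1)%nat with (S (2 * m)) at 1 by lia.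
  rewrite nu_fuel_S. destruct (Nat.eqb_spec (2*m+1) 0); [lia|].
  rewrite Nat.even_odd. reflexivity.
Qed.

Lemma pow2_pos : forall k, (1 <= 2 ^ k)%nat.
Proof. intros k. pose proof (Nat.pow_nonzero 2 k ltac:(lia)). lia. Qed.

Lemma nu_pow : forall k, nu (2 ^ k) = k.
Proof.
  induction k. reflexivity.
  rewrite Nat.pow_succ_r'. rewrite nu_even by apply pow2_pos. now rewrite IHk.
Qed.

Lemma nu_shift : forall k j, (1 <= j)%nat -> (j < 2 ^ k)%nat -> nu (2 ^ k + j) = nu j.
Proof.
  induction k; intros j H1 H2. simpl in H2; lia.
  rewrite Nat.pow_succ_r' in *.
  destruct (Nat.Even_or_Odd j) as [[h Hh]|[h Hh]]; subst.
  - replace (2 * 2 ^ k + 2 * h)%nat with (2 * (2 ^ k + h))%nat by lia.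
    rewrite !nu_even by lia. rewrite IHk by lia. reflexivity.
  - replace (2 * 2 ^ k + (2 * h + 1))%nat with (2 * (2 ^ k + h) + 1)%nat by lia.
    rewrite !nu_odd. reflexivity.
Qed.

Lemma dim_S : forall k, dim (S k) = (2 * dim k + 1)%nat.
Proof. intros k. unfold dim. rewrite Nat.pow_succ_r'. pose proof (pow2_pos k). lia. Qed.

Lemma dim_pos : forall m, (1 <= dim (S m))%nat.
Proof. intros m. rewrite dim_S. lia. Qed.

Lemma rho_pos : 0 < rho.
Proof. pose proof rho_gt2; lra. Qed.

Lemma alpha_pos : forall t, 0 < alpha t.
Proof. intros t. unfold alpha. pose proof (powerRZ_lt rho (Z.of_nat (nu (t + 1)) - 1) rho_pos). lra. Qed.

Lemma ind_nonneg : forall b x, 0 <= x -> 0 <= ind b x.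
Proof. intros [] x H; simpl; lra. Qed.

Lemma piv_nonneg : forall k j, 0 <= piv k j.
Proof. intros. unfold piv. apply ind_nonneg. apply Rlt_le, alpha_pos. Qed.

Ltac guards :=
  repeat match goal with
  | |- context [Nat.leb ?a ?b] => destruct (Nat.leb_spec a b); try lia
  | |- context [Nat.eqb ?a ?b] => destruct (Nat.eqb_spec a b); try lia
  end; cbn [andb ind].

Lemma piv_lo : forall k j, (j <= dim k)%nat -> piv (S k) j = piv k j.
Proof. intros k j H. unfold piv. rewrite dim_S. guards; reflexivity. Qed.

Lemma piv_mid : forall m, piv (S (S m)) (dim (S m) + 1) = rho ^ m + 1.
Proof.
  intros m. unfold piv. rewrite (dim_S (S m)). pose proof (dim_pos m). guards.
  unfold alpha. replace (dim (S m) + 1 - 1 + 1)%nat with (2 ^ S m)%nat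
    by (unfold dim; pose proof (pow2_pos (S m)); lia).
  rewrite nu_pow. replace (Z.of_nat (S m) - 1)%Z with (Z.of_nat m) by lia.
  rewrite <- pow_powerRZ. reflexivity.
Qed.

Lemma piv_hi : forall k j, (1 <= j <= dim k)%nat -> piv (S k) (dim k + 1 + j) = piv k j.
Proof.
  intros k j H. unfold piv. rewrite dim_S. guards.
  unfold alpha. replace (dim k + 1 + j - 1 + 1)%nat with (2 ^ k + j)%nat
    by (unfold dim in *; pose proof (pow2_pos k); lia).
  rewrite nu_shift by (unfold dim in *; lia).
  replace (j - 1 + 1)%nat with j by lia. reflexivity.
Qed.

Lemma cvec_SS : forall m j, cvec (S (S m)) j = c_step (S m) (cvec (S m)) j.
Proof. reflexivity. Qed.
Lemma mbar_SS : forall m i j, mbar (S (S m)) i j = mbar_step (S m) (mbar (S m)) i j.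
Proof. reflexivity. Qed.

Lemma cstep_lo : forall m j, (1 <= j <= dim (S m))%nat -> cvec (S (S m)) j = piv (S m) j.
Proof. intros m j H. rewrite cvec_SS. unfold c_step. cbv zeta. guards. ring. Qed.

Lemma cstep_mid : forall m, cvec (S (S m)) (dim (S m) + 1) = (1 + / rho ^ S m) * (rho ^ m + 1).
Proof.
  intros m. rewrite cvec_SS. unfold c_step. cbv zeta. pose proof (dim_pos m).
  replace (S m - 1)%nat with m by lia. guards. ring.
Qed.

Lemma cstep_hi : forall m j, (1 <= j <= dim (S m))%nat ->
  cvec (S (S m)) (dim (S m) + 1 + j) = rho * cvec (S m) j - (rho - 1 - / rho ^ S m) * piv (S m) j.
Proof.
  intros m j H. rewrite cvec_SS. unfold c_step. cbv zeta.
  guards. replace (dim (S m) + 1 + j - dim (S m) - 1)%nat with j by lia. ring.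
Qed.

Lemma mrow_lo : forall m j, (1 <= j <= dim (S m))%nat ->
  mbar (S (S m)) (2 * dim (S m) + 1) j = 0.
Proof.
  intros m j H. rewrite mbar_SS. unfold mbar_step. cbv zeta. pose proof (dim_pos m). guards. ring.
Qed.

Lemma mrow_mid : forall m,
  mbar (S (S m)) (2 * dim (S m) + 1) (dim (S m) + 1) = (rho - / rho ^ S m) * (rho ^ m + 1).
Proof.
  intros m. rewrite mbar_SS. unfold mbar_step. cbv zeta. pose proof (dim_pos m).
  replace (S m - 1)%nat with m by lia. guards. ring.
Qed.

Lemma mrow_hi : forall m j, (1 <= j <= dim (S m))%nat ->
  mbar (S (S m)) (2 * dim (S m) + 1) (dim (S m) + 1 + j) =
  rho ^ 2 * mbar (S m) (dim (S m)) j + (rho + 1) * cvec (S m) j - (1 + / rho ^ S m) * piv (S m) j.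
Proof.
  intros m j H. rewrite mbar_SS. unfold mbar_step. cbv zeta. pose proof (dim_pos m). guards;
  replace (dim (S m) + 1 + j - dim (S m) - 1)%nat with j by lia;
  replace (2 * dim (S m) + 1 - dim (S m) - 1)%nat with (dim (S m)) by lia; ring.
Qed.

Lemma inv_le1 : forall y, 1 <= y -> 0 < / y <= 1.
Proof.
  intros y Hy. split. apply Rinv_0_lt_compat; lra.
  rewrite <- Rinv_1. apply Rinv_le_contravar; lra.
Qed.

Lemma real_mid : forall r x y, 2 < r -> 1 <= x -> y = r * x ->
  0 <= (r - / y) * (x + 1) + (1 - r * y / (y + 1)) * ((1 + / y) * (x + 1) - (x + 1)).
Proof.
  intros r x y Hr Hx Hy.
  assert (1 <= y) by nra.
  replace ((r - / y) * (x + 1) + (1 - r * y / (y + 1)) * ((1 + / y) * (x + 1) - (x + 1)))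
    with ((x + 1) * r * y * / (y + 1)) by (field; lra).
  pose proof (inv_le1 (y+1) ltac:(lra)).
  apply Rmult_le_pos; [|lra]. apply Rmult_le_pos; [|lra]. apply Rmult_le_pos; lra.
Qed.

Lemma real_hi : forall r x y R c p, 2 < r -> r ^ 2 = 2 * r + 1 -> 1 <= x -> y = r * x ->
  0 <= R + (1 - y / (x + 1)) * (c - p) -> 0 <= c - p -> 0 <= p ->
  0 <= r ^ 2 * R + (r + 1) * c - (1 + / y) * p +
       (1 - r * y / (y + 1)) * (r * c - (r - 1 - / y) * p - p).
Proof.
  intros r x y R c p Hr Hr2 Hx Hy Hh Hd Hp.
  assert (1 <= y) by nra.
  set (h := R + (1 - y / (x + 1)) * (c - p)) in *.
  assert (E : r ^ 2 * R + (r + 1) * c - (1 + / y) * p +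
       (1 - r * y / (y + 1)) * (r * c - (r - 1 - / y) * p - p)
     = r ^ 2 * h + r * (r * y * / (x + 1) - r * y * / (y + 1)) * (c - p)
       + (r * y * / (y + 1)) * p + (2 * r + 1 - r ^ 2) * (c - p)).
  { unfold h. field. lra. }
  rewrite E, <- Hr2.
  assert (A : 0 <= r * y * / (x + 1) - r * y * / (y + 1)).
  { assert (/ (y + 1) <= / (x + 1)) by (apply Rinv_le_contravar; nra).
    assert (0 <= r * y) by nra. nra. }
  pose proof (inv_le1 (y+1) ltac:(lra)).
  assert (0 <= r ^ 2 * h) by (apply Rmult_le_pos; nra).
  assert (0 <= r * (r * y * / (x + 1) - r * y * / (y + 1)) * (c - p)).
  { apply Rmult_le_pos; [apply Rmult_le_pos|]; lra. }
  assert (0 <= r * y * / (y + 1) * p).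
  { apply Rmult_le_pos; [|lra]. apply Rmult_le_pos; nra. }
  lra.
Qed.
Definition Inv (K : nat) : Prop :=
 (forall j, (1 <= j <= dim K)%nat -> 0 <= cvec K j - piv K j) /\
 (forall i j, (1 <= i <= dim K)%nat -> (1 <= j <= dim K)%nat -> i <> j -> 0 <= mbar K i j) /\
 (forall j, (1 <= j)%nat -> (j < dim K)%nat ->
    0 <= mbar K (dim K) j + (1 - rho ^ K / (rho ^ (K - 1) + 1)) * (cvec K j - piv K j)).

Lemma Inv_base : Inv 1.
Proof.
  assert (D1 : dim 1 = 1%nat) by reflexivity.
  unfold Inv; rewrite D1; repeat split.
  - intros j Hj. assert (j = 1%nat) by lia. subst.
    change (cvec 1 1) with (2 * (rho - 1)).
    unfold piv, alpha. rewrite D1. simpl.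
    pose proof rho_gt2. pose proof (inv_le1 rho ltac:(lra)).
    assert (rho * / rho = 1) by (field; lra).
    replace (/ (rho * 1)) with (/ rho) by (f_equal; ring). nra.
  - intros; lia.
  - intros; lia.
Qed.

Lemma sum10 : forall a1 a2 a3 a4 a5 a6 a7 a8 a9 a10 : R,
  0 <= a1 + a6 -> 0 <= a2 -> 0 <= a3 -> 0 <= a4 -> 0 <= a5 -> 0 <= a7 -> 0 <= a8 ->
  0 <= a9 -> 0 <= a10 -> 0 <= a1 + a2 + a3 + a4 + a5 + a6 + a7 + a8 + a9 + a10.
Proof. intros; lra. Qed.

Lemma ind_cond : forall b x, (b = true -> 0 <= x) -> 0 <= ind b x.
Proof. intros [] x H; simpl; [apply H; reflexivity | lra]. Qed.

Ltac b2p H :=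
  repeat rewrite ?Bool.andb_true_iff, ?Nat.leb_le, ?Nat.eqb_eq in H.

Lemma Inv_step : forall m, Inv (S m) -> Inv (S (S m)).
Proof.
  intros m [IHa [IHb IHc]].
  pose proof rho_gt2 as Hr. pose proof rho_sq as Hr2.
  pose proof (dim_pos m) as Hn.
  assert (Hx : 1 <= rho ^ m) by (apply pow_R1_Rle; lra).
  assert (Hy : rho ^ S m = rho * rho ^ m) by reflexivity.
  assert (Hy1 : 1 <= rho ^ S m) by nra.
  pose proof (inv_le1 _ Hy1) as Hiy.
  assert (Hq0 : 0 <= rho ^ S m / (rho ^ m + 1)).
  { apply Rmult_le_pos. lra. pose proof (inv_le1 (rho^m+1) ltac:(lra)); lra. }
  replace (S m - 1)%nat with m in IHc by lia.
  unfold Inv. rewrite (dim_S (S m)).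
  replace (S (S m) - 1)%nat with (S m) by lia.
  set (n := dim (S m)) in *. assert (Hnd : n = dim (S m)) by reflexivity. clearbody n.
  assert (Ha : forall j, (1 <= j <= 2 * n + 1)%nat -> 0 <= cvec (S (S m)) j - piv (S (S m)) j).
  { intros j Hj.
    destruct (le_lt_dec j n).
    - rewrite cstep_lo, (piv_lo (S m)) by lia. lra.
    - destruct (Nat.eq_dec j (n + 1)).
      + subst j. rewrite Hnd, cstep_mid, piv_mid.
        assert (0 <= / rho ^ S m * (rho ^ m + 1)) by (apply Rmult_le_pos; lra). nra.
      + replace j with (n + 1 + (j - n - 1))%nat by lia. rewrite Hnd.
        rewrite cstep_hi, (piv_hi (S m)) by lia. rewrite <- Hnd.
        pose proof (IHa (j - n - 1)%nat ltac:(lia)).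
        pose proof (piv_nonneg (S m) (j - n - 1)).
        assert (0 <= / rho ^ S m * piv (S m) (j - n - 1)) by (apply Rmult_le_pos; lra).
        nra. }
  split; [exact Ha| split].
  - intros i j Hi Hj Hij. rewrite mbar_SS. unfold mbar_step. cbv zeta. rewrite <- Hnd.
    replace (S m - 1)%nat with m by lia.
    apply sum10.
    + guards; try lra; try (rewrite Rplus_0_r; apply IHb; lia).
      all: subst i; apply IHc; lia.
    + apply ind_cond. intros H. b2p H. apply Rmult_le_pos. nra. apply IHb; lia.
    + apply ind_nonneg. lra.
    + apply ind_nonneg. nra.
    + apply ind_nonneg. apply Rmult_le_pos; lra.
    + apply ind_cond. intros H. b2p H. apply Rmult_le_pos. exact Hq0. apply IHa; lia.
    + apply ind_nonneg. apply Rmult_le_pos. exact Hq0. apply piv_nonneg.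
    + apply ind_nonneg. apply Rmult_le_pos. 2: apply piv_nonneg.
      apply Rmult_le_pos. lra. pose proof (inv_le1 (rho^m+1) ltac:(lra)); lra.
    + apply ind_cond. intros H. b2p H.
      pose proof (IHa (j - n - 1)%nat ltac:(lia)).
      pose proof (piv_nonneg (S m) (j - n - 1)).
      assert (0 <= (rho - / rho ^ S m) * piv (S m) (j - n - 1)) by (apply Rmult_le_pos; lra).
      nra.
  - intros j Hj1 Hj2.
    change (rho ^ S (S m)) with (rho * rho ^ S m).
    destruct (le_lt_dec j n).
    + rewrite Hnd. rewrite mrow_lo, cstep_lo, (piv_lo (S m)) by lia.
      replace (piv (S m) j - piv (S m) j) with 0 by ring. lra.
    + destruct (Nat.eq_dec j (n + 1)).
      * subst j. rewrite Hnd, mrow_mid, cstep_mid, piv_mid.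
        apply (real_mid rho (rho ^ m) (rho ^ S m)); assumption.
      * replace j with (n + 1 + (j - n - 1))%nat by lia.
        set (j' := (j - n - 1)%nat).
        assert (Hj' : (1 <= j' < n)%nat) by (unfold j'; lia).
        pose proof (IHc j' ltac:(lia) ltac:(lia)) as H1.
        pose proof (IHa j' ltac:(lia)) as H2.
        pose proof (piv_nonneg (S m) j') as H3.
        pose proof (real_hi rho (rho ^ m) (rho ^ S m) (mbar (S m) n j') (cvec (S m) j') (piv (S m) j')
                      Hr Hr2 Hx Hy H1 H2 H3) as H4.
        rewrite Hnd. rewrite mrow_hi, cstep_hi, (piv_hi (S m)) by lia.
        rewrite <- Hnd. lra.
Qed.

Lemma lbar_nonneg : forall k i j, 0 <= lbar k i j.
Proof.
  pose proof rho_gt2.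
  induction k as [|k IH]; intros i j. simpl; lra.
  destruct k as [|k].
  - simpl. apply Rplus_le_le_0_compat; apply ind_nonneg; lra.
  - change (lbar (S (S k)) i j) with (lbar_step (S k) (lbar (S k)) i j).
    unfold lbar_step; cbv zeta.
    pose proof (pow_le rho (S k) ltac:(lra)).
    repeat apply Rplus_le_le_0_compat; apply ind_nonneg; try lra; try apply IH.
    + apply Rmult_le_pos; [nra| apply IH].
    + apply Rmult_le_pos; [lra| apply piv_nonneg].
    + apply Rmult_le_pos; [lra| apply piv_nonneg].
Qed.

Lemma Inv_all : forall m, Inv (S m).
Proof. induction m. exact Inv_base. apply Inv_step; assumption. Qed.

Theorem lemma12 (k : nat) (hk : (1 <= k)%nat) :
  (forall i j : nat, (i <= dim k)%nat -> (j <= dim k)%nat -> i <> j ->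
     0 <= lbar k i j)
  /\ (forall j : nat, (j <= dim k)%nat -> 0 <= llow k j)
  /\ (forall i j : nat, (1 <= i <= dim k)%nat -> (1 <= j <= dim k)%nat -> i <> j ->
     0 <= mbar k i j)
  /\ (forall j : nat, (1 <= j <= dim k)%nat -> 0 <= mlow k j).
Proof.
  destruct k as [|m]; [lia|].
  destruct (Inv_all m) as [Ha [Hb Hc]].
  pose proof rho_gt2.
  split; [|split; [|split]].
  - intros; apply lbar_nonneg.
  - intros j _. unfold llow. destruct (j <? dim (S m))%nat.
    + apply Rlt_le, alpha_pos.
    + apply pow_le; lra.
  - exact Hb.
  - intros j Hj. unfold mlow. pose proof (Ha j Hj). pose proof (piv_nonneg (S m) j).
    pose proof (ind_nonneg (Nat.eqb j 1) 1 ltac:(lra)). lra.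
Qed.
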